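(* Let $D$ be an integral domain with quotient field $K$. The map $\mathcal F\mapsto\boldsymbol{\mathcal S}(\mathcal F):=D[X]\setminus\bigcup\{Q[X]\mid Q\in\mathrm{Spec}(D),\ Q\notin\mathcal F\}$ is a bijection between the set of localizing systems of finite type on $D$ and the set of extended saturated multiplicative subsets of $D[X]$. Moreover, for every localizing system of finite type $\mathcal F$ and every $E\in\overline{\boldsymbol F}(D)$, $E_{\mathcal F}=E\cdot D[X]_{\boldsymbol{\mathcal S}(\mathcal F)}\cap K$.
   Context: $\overline{\boldsymbol F}(D)$ is the set of nonzero $D$-submodules of $K$. A localizing system of ideals of $D$ is a nonempty set $\mathcal F$ of ideals of $D$ with $(0)\notin\mathcal F$ such that: if $I\in\mathcal F$ and $I\subseteq J$ ($J$ an ideal) then $J\in\mathcal F$; and if $I\in\mathcal F$ and $J$ is an ideal with $(J:_D iD)\in\mathcal F$ for every $i\in I$, then $J\in\mathcal F$. It is of finite type if every $I\in\mathcal F$ contains a finitely generated $J\in\mathcal F$. For $E\in\overline{\boldsymbol F}(D)$, $E_{\mathcal F}=\bigcup\{(E:I)\mid I\in\mathcal F\}=\{z\in K\mid (E:_D zD)\in\mathcal F\}$. For a multiplicative set $\mathcal S\subseteq D[X]$, its extended saturation is $\mathcal S^\sharp=D[X]\setminus\bigcup\{P[X]\mid P\in\mathrm{Spec}(D),\ P[X]\cap\mathcal S=\emptyset\}$, and $\mathcal S$ is extended saturated if $\mathcal S=\mathcal S^\sharp$. *)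

(* Defs.v *)
From HB Require Import structures.
From mathcomp Require Import all_boot all_order all_algebra.
Set Implicit Arguments. Unset Strict Implicit. Unset Printing Implicit Defensive.
Import Order.TTheory GRing.Theory Num.Theory.
Local Open Scope ring_scope.

(* The integral domain D is represented as a subring D of its quotient
   field K (given as a Prop-valued predicate on K).  Subsets of K (ideals,
   D-submodules) are Prop-valued predicates on K. *)

Definition subring (K : fieldType) (D : K -> Prop) : Prop :=
  D 0 /\ D 1 /\ (forall a b, D a -> D b -> D (a - b)) /\
  (forall a b, D a -> D b -> D (a * b)).

Definition is_quotient_field (K : fieldType) (D : K -> Prop) : Prop :=
  subring D /\ forall z : K, exists a b, D a /\ D b /\ b != 0 /\ z = a / b.

Definition ideal (K : fieldType) (D I : K -> Prop) : Prop :=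
  (forall x, I x -> D x) /\ I 0 /\ (forall x y, I x -> I y -> I (x + y)) /\
  (forall d x, D d -> I x -> I (d * x)).

Definition prime_ideal (K : fieldType) (D P : K -> Prop) : Prop :=
  ideal D P /\ ~ P 1 /\ (forall a b, D a -> D b -> P (a * b) -> P a \/ P b).

Definition fg_ideal (K : fieldType) (D J : K -> Prop) : Prop :=
  ideal D J /\ exists s : seq K, (forall i, (i < size s)%N -> D s`_i) /\
    forall x, J x <-> exists ds : seq K, size ds = size s /\
      (forall i, (i < size ds)%N -> D ds`_i) /\
      x = \sum_(i < size s) ds`_i * s`_i.

Definition colonD (K : fieldType) (D J : K -> Prop) (z : K) : K -> Prop :=
  fun d => D d /\ J (d * z).

Definition localizing_system (K : fieldType) (D : K -> Prop)
    (F : (K -> Prop) -> Prop) : Prop :=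
  (forall I, F I -> ideal D I) /\
  (exists I, F I) /\
  ~ F (fun x => x = 0) /\
  (forall I J, F I -> ideal D J -> (forall x, I x -> J x) -> F J) /\
  (forall I J, F I -> ideal D J -> (forall i, I i -> F (colonD D J i)) -> F J).

Definition finite_type (K : fieldType) (D : K -> Prop)
    (F : (K -> Prop) -> Prop) : Prop :=
  forall I, F I -> exists J, fg_ideal D J /\ F J /\ (forall x, J x -> I x).

Definition Fbar (K : fieldType) (D E : K -> Prop) : Prop :=
  E 0 /\ (forall x y, E x -> E y -> E (x + y)) /\
  (forall d x, D d -> E x -> E (d * x)) /\ (exists x, E x /\ x != 0).

Definition star_F (K : fieldType) (F : (K -> Prop) -> Prop) (E : K -> Prop)
  : K -> Prop :=
  fun z => exists I, F I /\ forall i, I i -> E (z * i).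

(* P[X] : polynomials in K[X] with all coefficients in P (so D[X] = polyIn D) *)
Definition polyIn (K : fieldType) (P : K -> Prop) : {poly K} -> Prop :=
  fun p => forall i, P p`_i.

Definition mult_subset (K : fieldType) (D : K -> Prop) (S : {poly K} -> Prop)
  : Prop :=
  (forall p, S p -> polyIn D p) /\ S 1 /\ ~ S 0 /\
  (forall p q, S p -> S q -> S (p * q)).

Definition ext_saturation (K : fieldType) (D : K -> Prop) (S : {poly K} -> Prop)
  : {poly K} -> Prop :=
  fun p => polyIn D p /\
    ~ exists P, prime_ideal D P /\ (forall q, S q -> ~ polyIn P q) /\ polyIn P p.

Definition ext_saturated (K : fieldType) (D : K -> Prop) (S : {poly K} -> Prop)
  : Prop := forall p, S p <-> ext_saturation D S p.

Definition SF (K : fieldType) (D : K -> Prop) (F : (K -> Prop) -> Prop)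
  : {poly K} -> Prop :=
  fun p => polyIn D p /\ ~ exists Q, prime_ideal D Q /\ ~ F Q /\ polyIn Q p.

Definition toKX (K : fieldType) (p : {poly K}) : {fraction {poly K}} :=
  FracField.tofrac p.

Definition locDX (K : fieldType) (D : K -> Prop) (S : {poly K} -> Prop)
  : {fraction {poly K}} -> Prop :=
  fun r => exists f s, polyIn D f /\ S s /\ r = toKX f / toKX s.

Definition ext_mod (K : fieldType) (D : K -> Prop) (S : {poly K} -> Prop)
  (E : K -> Prop) : {fraction {poly K}} -> Prop :=
  fun z => exists (n : nat) (e : 'I_n -> K) (r : 'I_n -> {fraction {poly K}}),
    (forall i, E (e i)) /\ (forall i, locDX D S (r i)) /\
    z = \sum_(i < n) toKX (e i)%:P * r i.

(* Main.v *)
Require Import Defs.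
From HB Require Import structures.
From mathcomp Require Import all_boot all_order all_algebra.
From Stdlib Require Import Classical ClassicalEpsilon FunctionalExtensionality PropExtensionality.
Import GRing.Theory.
Set Implicit Arguments. Unset Strict Implicit.
Local Open Scope ring_scope.

Section Basics.
Variable K : fieldType.
Variable D : K -> Prop.
Hypothesis HD : subring D.

Lemma D0 : D 0. Proof. by case: HD. Qed.
Lemma D1 : D 1. Proof. by case: HD => _ []. Qed.
Lemma Dsub a b : D a -> D b -> D (a - b). Proof. by case: HD => _ [_ []] H _; apply: H. Qed.
Lemma Dmul a b : D a -> D b -> D (a * b). Proof. by case: HD => _ [_ []] _ H; apply: H. Qed.
Lemma Dopp a : D a -> D (- a).
Proof. move=> Ha; rewrite -sub0r; apply: Dsub => //; exact: D0. Qed.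
Lemma Dadd a b : D a -> D b -> D (a + b).
Proof. move=> Ha Hb; rewrite -[b]opprK; apply: Dsub => //; exact: Dopp. Qed.

Definition dmod (E : K -> Prop) := E 0 /\ (forall x y, E x -> E y -> E (x + y)) /\
  (forall d x, D d -> E x -> E (d * x)).

Lemma dmod_sum E n (f : 'I_n -> K) : dmod E -> (forall i, E (f i)) -> E (\sum_(i < n) f i).
Proof. move=> [E0 [EA _]] Hf; apply: (big_ind E) => //. Qed.

Lemma dmod_sumP E n (P : pred 'I_n) (f : 'I_n -> K) : dmod E ->
  (forall i, P i -> E (f i)) -> E (\sum_(i < n | P i) f i).
Proof. move=> [E0 [EA _]] Hf; apply: (big_ind E) => //. Qed.

Lemma ideal_dmod I : ideal D I -> dmod I.
Proof. by case=> _ [? [? ?]]. Qed.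

Lemma D_dmod : dmod D.
Proof. split; [exact: D0|split; [exact: Dadd|exact: Dmul]]. Qed.

Lemma ideal_D : ideal D D.
Proof. split=> //; split; [exact: D0|split; [exact: Dadd|exact: Dmul]]. Qed.

Lemma ideal_opp I x : ideal D I -> I x -> I (- x).
Proof. move=> [_ [_ [_ HM]]] Hx; rewrite -mulN1r; apply: HM => //; apply: Dopp; exact: D1. Qed.

Lemma ideal_sub I x y : ideal D I -> I x -> I y -> I (x - y).
Proof. move=> HI Hx Hy; case: (HI) => _ [_ [HA _]]; apply: HA => //; exact: ideal_opp. Qed.

Lemma ideal_mulr I d x : ideal D I -> D d -> I x -> I (x * d).
Proof. move=> [_ [_ [_ HM]]] Hd Hx; rewrite mulrC; exact: HM. Qed.

Lemma polyIn_mul E p q : dmod E -> polyIn D q -> polyIn E p -> polyIn E (q * p).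
Proof.
move=> HE Hq Hp i; rewrite coefM; apply: dmod_sum => // j.
by case: HE => _ [_ HM]; apply: HM.
Qed.

Lemma polyInD_mul p q : polyIn D p -> polyIn D q -> polyIn D (p * q).
Proof. move=> Hp Hq; apply: polyIn_mul => //; exact: D_dmod. Qed.

Lemma polyIn1 : polyIn D 1.
Proof. move=> i; rewrite coefC; case: (i == 0)%N; [exact: D1|exact: D0]. Qed.

Lemma polyInX n : polyIn D 'X^n.
Proof. move=> i; rewrite coefXn; case: (i == n); [exact: D1|exact: D0]. Qed.

Lemma polyIn_Poly (E : K -> Prop) (s : seq K) : E 0 -> (forall i, (i < size s)%N -> E s`_i) -> polyIn E (Poly s).
Proof.
move=> E0 Hs i; rewrite coef_Poly; case: (ltnP i (size s)) => Hi; first exact: Hs.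
by rewrite nth_default.
Qed.

End Basics.

Section Gen.
Variable K : fieldType.
Variable D : K -> Prop.
Hypothesis HD : subring D.

Definition gen (s : seq K) : K -> Prop := fun x => exists ds : seq K, size ds = size s /\
      (forall i, (i < size ds)%N -> D ds`_i) /\
      x = \sum_(i < size s) ds`_i * s`_i.

Lemma gen_sub I s x : ideal D I -> (forall i, (i < size s)%N -> I s`_i) -> gen s x -> I x.
Proof.
move=> HI Hs [ds [Hsz [Hds ->]]]. apply: (@dmod_sum _ D); first exact: ideal_dmod.
move=> i; case: HI => _ [_ [_ HM]]; apply: HM; first by apply: Hds; rewrite Hsz.
exact: Hs.
Qed.

Lemma gen_in s i : (i < size s)%N -> gen s s`_i.
Proof.
move=> Hi; exists (mkseq (fun j => (j == i)%:R) (size s)); rewrite size_mkseq; split=> //; split.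
  move=> j Hj; rewrite nth_mkseq //; case: (j == i); [exact: D1|exact: D0].
rewrite (bigD1 (Ordinal Hi)) //= nth_mkseq // eqxx mul1r big1 ?addr0 // => j Hj.
rewrite nth_mkseq //; case: eqP => [Hji|_]; last by rewrite mul0r.
move: Hj; have -> : j = Ordinal Hi by apply: val_inj.
by rewrite eqxx.
Qed.

Lemma gen_ideal s : (forall i, (i < size s)%N -> D s`_i) -> ideal D (gen s).
Proof.
move=> Hs; split; first by move=> x; apply: gen_sub => //; exact: ideal_D.
split.
  exists (nseq (size s) 0); rewrite size_nseq; split=> //; split.
    by move=> i Hi; rewrite nth_nseq Hi; exact: D0.
  by rewrite big1 // => i _; rewrite nth_nseq ltn_ord mul0r.
split.
  move=> x y [ds [Hsz [Hds ->]]] [es [Hsz' [Hes ->]]].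
  exists (mkseq (fun i => ds`_i + es`_i) (size s)); rewrite size_mkseq; split=> //; split.
    move=> i Hi; rewrite nth_mkseq //; apply: Dadd => //; [apply: Hds|apply: Hes]; by rewrite ?Hsz ?Hsz'.
  by rewrite -big_split /=; apply: eq_bigr => i _; rewrite nth_mkseq // mulrDl.
move=> d x Hd [ds [Hsz [Hds ->]]].
exists (mkseq (fun i => d * ds`_i) (size s)); rewrite size_mkseq; split=> //; split.
  move=> i Hi; rewrite nth_mkseq //; apply: Dmul => //; apply: Hds; by rewrite Hsz.
by rewrite mulr_sumr; apply: eq_bigr => i _; rewrite nth_mkseq // mulrA.
Qed.

End Gen.

Section Zorn.
Variable A : Type.
Definition zsub (x y : A -> Prop) := forall a, x a -> y a.
Definition zchain (C : (A -> Prop) -> Prop) := forall x y, C x -> C y -> zsub x y \/ zsub y x.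
Definition zunion (C : (A -> Prop) -> Prop) : A -> Prop := fun a => exists x, C x /\ x a.
Definition zssub x y := zsub x y /\ ~ zsub y x.

Lemma sub_antisym x y : zsub x y -> zsub y x -> x = y.
Proof.
intros H1 H2; apply functional_extensionality; intro a;
apply propositional_extensionality; split; auto.
Qed.

Section Tower.
Variable M : (A -> Prop) -> Prop.
Variable x0 : A -> Prop.
Variable g : (A -> Prop) -> (A -> Prop).
Hypothesis HM0 : M x0.
Hypothesis Hch : forall C, (forall x, C x -> M x) -> zchain C -> (exists x, C x) -> M (zunion C).
Hypothesis Hg : forall x, M x -> zsub x0 x -> M (g x) /\ zsub x (g x) /\ ~ zsub (g x) x.

Inductive tower : (A -> Prop) -> Prop :=
| Tb : tower x0
| Ts x : tower x -> tower (g x)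
| Tu C : (forall x, C x -> tower x) -> zchain C -> (exists x, C x) -> tower (zunion C).

Lemma T_M x : tower x -> M x /\ zsub x0 x.
Proof.
induction 1 as [| x Tx IH | C HC IH Hc Hne].
- split; [exact HM0 | intros a h; exact h].
- destruct IH as [H1 H2]. destruct (Hg H1 H2) as [H3 [H4 _]].
  split; [exact H3 | intros a h; apply H4, H2, h].
- split.
  + apply Hch; [intros x Cx; apply (IH x Cx) | exact Hc | exact Hne].
  + destruct Hne as [x Cx]. intros a h. exists x. split; [exact Cx|]. apply (IH x Cx), h.
Qed.

Lemma T_ext x : tower x -> zsub x (g x).
Proof. intro T; destruct (T_M T) as [H1 H2]; apply (Hg H1 H2). Qed.

Lemma T_strict x : tower x -> ~ zsub (g x) x.
Proof. intro T; destruct (T_M T) as [H1 H2]; apply (Hg H1 H2). Qed.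

Definition extreme c := forall x, tower x -> zssub x c -> zsub (g x) c.

Lemma lemma1 c : tower c -> extreme c -> forall x, tower x -> zsub x c \/ zsub (g c) x.
Proof.
intros Tc Ec x Tx. induction Tx as [| x Tx IH | C HC IH Hc Hne].
- left. apply (T_M Tc).
- destruct IH as [IH|IH].
  + destruct (classic (zsub c x)) as [H|H].
    * right. rewrite (sub_antisym IH H). intros a h; exact h.
    * left. apply Ec; [exact Tx | split; assumption].
  + right. intros a h. apply (T_ext Tx), IH, h.
- destruct (classic (exists x, C x /\ zsub (g c) x)) as [[x [Cx H]]|H].
  + right. intros a h. exists x. split; [exact Cx | apply H, h].
  + left. intros a [x [Cx h]]. destruct (IH x Cx) as [H1|H1].
    * apply H1, h.
    * exfalso. apply H. exists x. split; assumption.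
Qed.

Lemma lemma2 c : tower c -> extreme c.
Proof.
induction 1 as [| c Tc IH | C HC IH Hc Hne].
- intros x Tx [H1 H2]. exfalso. apply H2. apply (T_M Tx).
- intros x Tx [H1 H2]. destruct (lemma1 Tc IH Tx) as [H|H].
  + destruct (classic (zsub c x)) as [H3|H3].
    * rewrite (sub_antisym H H3). intros a h; exact h.
    * intros a h. apply (T_ext Tc). apply (IH x Tx); [split; assumption | exact h].
  + exfalso. apply H2. exact H.
- intros x Tx [H1 H2].
  destruct (classic (exists c, C c /\ zsub x c)) as [[c [Cc Hxc]]|Hn].
  + destruct (classic (zsub c x)) as [Hcx|Hcx].
    * assert (Exc : x = c) by (apply sub_antisym; assumption). subst x.
      destruct (not_all_ex_not _ _ H2) as [a Ha].
      destruct (imply_to_and _ _ Ha) as [[c' [Cc' ha]] hna].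
      destruct (Hc c c' Cc Cc') as [Hs|Hs].
      -- assert (Hs' : ~ zsub c' c) by (intro Hs'; apply hna, Hs', ha).
         intros b hb. exists c'. split; [exact Cc'|].
         apply (IH c' Cc' c (HC c Cc)); [split; assumption | exact hb].
      -- exfalso. apply hna, Hs, ha.
    * intros b hb. exists c. split; [exact Cc|].
      apply (IH c Cc x Tx); [split; assumption | exact hb].
  + exfalso. apply H2. intros a [c [Cc h]].
    destruct (lemma1 (HC c Cc) (IH c Cc) Tx) as [H|H].
    * exfalso. apply Hn. exists c. split; assumption.
    * apply H, (T_ext (HC c Cc)), h.
Qed.

Lemma tower_false : False.
Proof.
assert (Hc : zchain tower).
{ intros x c Tx Tc. destruct (lemma1 Tc (lemma2 Tc) Tx) as [H|H].
  - left; exact H.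
  - right. intros a h. apply H, (T_ext Tc), h. }
assert (TU : tower (zunion tower)).
{ apply Tu; [intros x h; exact h | exact Hc | exists x0; apply Tb]. }
apply (T_strict TU). intros a h. exists (g (zunion tower)). split; [apply Ts, TU | exact h].
Qed.
End Tower.

Lemma zorn (M : (A -> Prop) -> Prop) x0 : M x0 ->
  (forall C, (forall x, C x -> M x) -> zchain C -> (exists x, C x) -> M (zunion C)) ->
  exists m, M m /\ zsub x0 m /\ forall y, M y -> zsub m y -> zsub y m.
Proof.
intros HM0 Hch. apply NNPP. intro Hn.
assert (H : forall x, exists y, M x /\ zsub x0 x -> M y /\ zsub x y /\ ~ zsub y x).
{ intro x. destruct (classic (M x /\ zsub x0 x)) as [[h1 h2]|h].
  - apply NNPP. intro Hy. apply Hn. exists x. split; [exact h1|split; [exact h2|]].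
    intros y My Sxy. apply NNPP. intro Nyx. apply Hy. exists y. intros _. auto.
  - exists x. intro h'. contradiction. }
set (g := fun x => proj1_sig (constructive_indefinite_description _ (H x))).
apply (@tower_false M x0 g HM0 Hch).
intros x h1 h2. unfold g. destruct (constructive_indefinite_description _ (H x)) as [y Hy].
simpl. apply Hy. split; assumption.
Qed.
End Zorn.

Section Key.
Variable K : fieldType.
Variable D : K -> Prop.
Hypothesis HD : subring D.

Lemma colon_ideal Q z : ideal D Q -> ideal D (colonD D Q z).
Proof.
move=> [HQD [HQ0 [HQA HQM]]]; split; first by move=> x [].
split; first by split; [exact: (D0 HD) | rewrite mul0r].
split.
  move=> x y [Dx Qx] [Dy Qy]; split; first exact: (Dadd HD).
  by rewrite mulrDl; apply: HQA.
move=> d x Dd [Dx Qx]; split; first exact: (Dmul HD).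
by rewrite -mulrA; apply: HQM.
Qed.

Definition QA (Q : K -> Prop) a : K -> Prop := fun x => exists q d, Q q /\ D d /\ x = q + d * a.

Lemma QA_ideal Q a : ideal D Q -> D a -> ideal D (QA Q a).
Proof.
move=> HQ Da; have [HQD [HQ0 [HQA HQM]]] := HQ.
split.
  by move=> x [q [d [Qq [Dd ->]]]]; apply: (Dadd HD); [exact: HQD | exact: (Dmul HD)].
split; first by exists 0, 0; split=> //; split; [exact: (D0 HD)| rewrite mul0r addr0].
split.
  move=> x y [q [d [Qq [Dd ->]]]] [q' [d' [Qq' [Dd' ->]]]].
  exists (q + q'), (d + d'); split; first exact: HQA.
  split; first exact: (Dadd HD).
  by rewrite mulrDl addrACA.
move=> e x De [q [d [Qq [Dd ->]]]]; exists (e * q), (e * d); split; first exact: HQM.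
split; first exact: (Dmul HD).
by rewrite mulrDr mulrA.
Qed.

Lemma QA_sub Q a : ideal D Q -> zsub Q (QA Q a).
Proof. move=> HQ x Qx; exists x, 0; split=> //; split; [exact: (D0 HD) | by rewrite mul0r addr0]. Qed.

Lemma QA_a Q a : ideal D Q -> ~ QA Q a a -> False.
Proof.
move=> [_ [HQ0 _]] H; apply: H; exists 0, 1; split=> //; split; [exact: (D1 HD)|by rewrite add0r mul1r].
Qed.

Variable F : (K -> Prop) -> Prop.
Hypothesis LS : localizing_system D F.
Hypothesis FT : finite_type D F.

Lemma F_up I J : F I -> ideal D J -> zsub I J -> F J.
Proof. case: LS => _ [_ [_ [H _]]] FI HJ Hs; exact: (H I J FI HJ Hs). Qed.

Lemma F_ideal I : F I -> ideal D I.
Proof. by case: LS => H _; apply: H. Qed.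

Lemma F_D : F D.
Proof.
case: (LS) => HI [[I FI] _]; apply: (F_up FI (ideal_D HD)).
by move=> x Ix; case: (HI I FI) => H _; apply: H.
Qed.

Lemma chain_union_ideal C : zchain C -> (forall c, C c -> ideal D c) -> (exists c, C c) ->
  ideal D (zunion C).
Proof.
move=> Hc HI [c0 Cc0]; split.
  by move=> x [c [Cc cx]]; case: (HI c Cc) => H _; apply: H.
split; first by exists c0; split=> //; case: (HI c0 Cc0) => _ [].
split.
  move=> x y [c [Cc cx]] [c' [Cc' cy]].
  case: (Hc c c' Cc Cc') => Hs.
    exists c'; split=> //; case: (HI c' Cc') => _ [_ [H _]]; apply: H => //; exact: Hs.
  exists c; split=> //; case: (HI c Cc) => _ [_ [H _]]; apply: H => //; exact: Hs.
move=> d x Dd [c [Cc cx]]; exists c; split=> //.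
by case: (HI c Cc) => _ [_ [_ H]]; apply: H.
Qed.

Lemma chain_union_notF C : zchain C -> (forall c, C c -> ideal D c /\ ~ F c) -> (exists c, C c) ->
  ~ F (zunion C).
Proof.
move=> Hc HI [c0 Cc0] FU.
have [G [[HG [s [Ds Hs]]] [FG GU]]] := FT FU.
have sG : forall i, (i < size s)%N -> G s`_i.
  by move=> i Hi; apply/Hs; exact: (gen_in HD Hi).
have : forall n, (n <= size s)%N -> exists c, C c /\ forall i, (i < n)%N -> c s`_i.
  elim=> [|n IH] Hn; first by exists c0; split.
  have [c [Cc Hci]] := IH (ltnW Hn).
  have [c' [Cc' c's]] := GU _ (sG n Hn).
  case: (Hc c c' Cc Cc') => Hs'.
    exists c'; split=> // i; rewrite ltnS leq_eqVlt => /orP [/eqP ->|Hi] //.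
    by apply: Hs'; apply: Hci.
  exists c; split=> // i; rewrite ltnS leq_eqVlt => /orP [/eqP ->|Hi]; last exact: Hci.
  exact: Hs'.
move=> /(_ (size s) (leqnn _)) [c [Cc Hcs]].
have [Ic nFc] := HI c Cc.
apply: nFc; apply: (F_up FG Ic) => x Gx.
apply: (gen_sub Ic Hcs); exact/Hs.
Qed.

Lemma key J : ideal D J -> ~ F J -> exists Q, prime_ideal D Q /\ zsub J Q /\ ~ F Q.
Proof.
move=> HJ nFJ.
pose M := fun I => ideal D I /\ zsub J I /\ ~ F I.
have [Q [[HQ [JQ nFQ]] [_ Qmax]]] : exists m, M m /\ zsub J m /\ forall y, M y -> zsub m y -> zsub y m.
  apply: zorn; first by split=> //; split=> // x.
  move=> C HC Hc Hne; split.
    by apply: chain_union_ideal => // c Cc; case: (HC c Cc).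
  split.
    case: Hne => c Cc x Jx; exists c; split=> //; by case: (HC c Cc) => _ [H _]; apply: H.
  by apply: chain_union_notF => // c Cc; case: (HC c Cc) => ? [].
exists Q; split; last by split.
have [HQD [HQ0 [HQA HQM]]] := HQ.
split=> //; split.
  move=> Q1; apply: nFQ; apply: (F_up F_D HQ) => x Dx.
  by rewrite -[x]mulr1; apply: HQM.
move=> a b Da Db Qab; apply: NNPP => /not_or_and [nQa nQb].
have FQA : forall c, D c -> ~ Q c -> F (QA Q c).
  move=> c Dc nQc; apply: NNPP => nF.
  have Hs : zsub (QA Q c) Q.
    apply: Qmax; last exact: QA_sub.
    by split; [exact: QA_ideal | split=> // x Jx; apply: QA_sub => //; apply: JQ].
  by apply: (QA_a (Q := Q) (a := c)) => // Hc; apply: nQc; exact: Hs.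
have FQa := FQA a Da nQa.
have FQb := FQA b Db nQb.
apply: nFQ.
case: LS => _ [_ [_ [_ LS2]]]; apply: (LS2 _ _ FQa HQ) => i [q [d [Qq [Dd ->]]]].
apply: (F_up FQb (colon_ideal _ HQ)) => y [q' [d' [Qq' [Dd' ->]]]].
have Dq : D q by apply: HQD.
have Dq' : D q' by apply: HQD.
split; first by apply: (Dadd HD) => //; apply: (Dmul HD).
rewrite mulrDl; apply: (HQA).
  apply: (ideal_mulr HQ) => //; apply: (Dadd HD) => //; exact: (Dmul HD).
rewrite mulrDr; apply: (HQA).
  apply: (HQM) => //; exact: (Dmul HD).
rewrite mulrACA [b * a]mulrC; apply: (HQM) => //; exact: (Dmul HD).
Qed.
End Key.

Lemma min_index (P : nat -> Prop) : ~ (forall i, P i) -> exists i, ~ P i /\ forall k, (k < i)%N -> P k.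
Proof.
move=> H; have [n Hn] := not_all_ex_not _ _ H.
suff : forall m n, (n <= m)%N -> ~ P n -> exists i, ~ P i /\ forall k, (k < i)%N -> P k.
  by move=> /(_ n n (leqnn n) Hn).
elim=> [|m IH] n0 Hn0 nP.
  exists n0; split=> // k Hk; exfalso; move: Hk; rewrite leqn0 in Hn0; by rewrite (eqP Hn0).
case: (classic (forall k, (k < n0)%N -> P k)) => Hc; first by exists n0.
have [k Hk] := not_all_ex_not _ _ Hc.
have [Hk1 Hk2] := imply_to_and _ _ Hk.
by apply: (IH k) => //; rewrite -ltnS (leq_trans Hk1).
Qed.

Section Gauss.
Variable K : fieldType.
Variable D : K -> Prop.
Hypothesis HD : subring D.

Lemma gauss P p q : prime_ideal D P -> polyIn D p -> polyIn D q -> polyIn P (p * q) ->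
  polyIn P p \/ polyIn P q.
Proof.
move=> [HP [nP1 Hpr]] Dp Dq Ppq; apply: NNPP => /not_or_and [np nq].
have [i [Pi Hi]] := min_index np.
have [j [Pj Hj]] := min_index nq.
have [HPD [HP0 [HPA HPM]]] := HP.
have : P (p`_i * q`_j).
  have Hc := Ppq (i + j)%N; rewrite coefM in Hc.
  have Hij : (i < (i + j).+1)%N by rewrite ltnS leq_addr.
  rewrite (bigD1 (Ordinal Hij)) //= addKn in Hc.
  have Hr : P (\sum_(k < (i + j).+1 | k != Ordinal Hij) p`_k * q`_(i + j - k)).
    apply: (dmod_sumP (ideal_dmod HP)) => k Hk.
    case: (ltngtP k i) => Hki.
    - by apply: (ideal_mulr HP); [apply: Dq | apply: Hi].
    - apply: (HPM) => //; apply: Hj.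
      have Hk' : (k <= i + j)%N by rewrite -ltnS.
      by rewrite -(ltn_add2l k) subnKC // ltn_add2r.
    - exfalso; move: Hk; have -> : k = Ordinal Hij by apply: val_inj.
      by rewrite eqxx.
  have := ideal_sub HD HP Hc Hr.
  by rewrite addrK.
by move=> H; case: (Hpr _ _ (Dp i) (Dq j) H).
Qed.
End Gauss.

Section SFsec.
Variable K : fieldType.
Variable D : K -> Prop.
Hypothesis HD : subring D.

Lemma zero_prime : prime_ideal D (fun x => x = 0).
Proof.
split.
  split; first by move=> x ->; exact: (D0 HD).
  split=> //; split; first by move=> x y -> ->; rewrite addr0.
  by move=> d x _ ->; rewrite mulr0.
split; first by move=> /eqP; rewrite oner_eq0.
by move=> a b _ _ /eqP; rewrite mulf_eq0 => /orP [/eqP ->|/eqP ->]; [left|right].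
Qed.

Lemma polyIn_ideal_nth I (p : {poly K}) : ideal D I -> (forall i, (i < size p)%N -> I p`_i) -> polyIn I p.
Proof.
move=> [_ [HI0 _]] H i; case: (ltnP i (size p)) => Hi; first exact: H.
by rewrite nth_default.
Qed.

Lemma fg_in J s : ideal D J -> (forall x, J x <-> gen D s x) -> forall i, J s`_i.
Proof.
move=> [_ [HJ0 _]] Hs i; case: (ltnP i (size s)) => Hi.
  by apply/Hs; apply: (gen_in HD).
by rewrite nth_default.
Qed.

Variable F : (K -> Prop) -> Prop.
Hypothesis LS : localizing_system D F.
Hypothesis FT : finite_type D F.

Lemma SF_mult : mult_subset D (SF D F).
Proof.
split; first by move=> p [].
split.
  split; first exact: (polyIn1 HD).
  move=> [Q [[_ [nQ1 _]] [_ HQ]]]; apply: nQ1.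
  by have := HQ 0%N; rewrite coefC eqxx.
split.
  move=> [_ H]; apply: H; exists (fun x => x = 0); split; first exact: zero_prime.
  split; first by case: LS => _ [_ []].
  by move=> i; rewrite coef0.
move=> p q [Dp Hp] [Dq Hq]; split; first exact: (polyInD_mul HD).
move=> [Q [HQ [nFQ Qpq]]].
case: (gauss HD HQ Dp Dq Qpq) => H.
  by apply: Hp; exists Q.
by apply: Hq; exists Q.
Qed.

Lemma SF_sat : ext_saturated D (SF D F).
Proof.
move=> p; split.
  move=> [Dp Hp]; split=> //; move=> [P [HP [HS Pp]]].
  by apply: (HS p) => //; split.
move=> [Dp Hp]; split=> //; move=> [Q [HQ [nFQ Qp]]].
apply: Hp; exists Q; split=> //; split=> // q [Dq Hq] Qq.
by apply: Hq; exists Q.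
Qed.

Lemma SF_neq0 p : SF D F p -> p != 0.
Proof.
move=> H; apply/eqP => Hp; subst p; have [_ [_ [H0 _]]] := SF_mult; exact: H0.
Qed.

Lemma SF_content p : SF D F p -> F (gen D p).
Proof.
move=> [Dp Hp]; apply: NNPP => nF.
have Hg : ideal D (gen D p) by apply: (gen_ideal HD) => i _; apply: Dp.
have [Q [HQ [JQ nFQ]]] := key HD LS FT Hg nF.
apply: Hp; exists Q; split=> //; split=> //.
apply: (polyIn_ideal_nth (proj1 HQ)) => i Hi; apply: JQ; exact: (gen_in HD).
Qed.

Lemma Poly_SF J s : (forall i, (i < size s)%N -> D s`_i) -> ideal D J ->
  (forall x, J x <-> gen D s x) -> F J -> SF D F (Poly s).
Proof.
move=> Ds HJ Hs FJ; split; first by apply: polyIn_Poly; [exact: (D0 HD) | exact: Ds].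
move=> [Q [HQ [nFQ Qp]]]; apply: nFQ.
apply: (F_up LS FJ (proj1 HQ)) => x /Hs; apply: (gen_sub (proj1 HQ)) => i Hi.
by have := Qp i; rewrite coef_Poly.
Qed.

End SFsec.

Section Inj.
Variable K : fieldType.
Variable D : K -> Prop.
Hypothesis HD : subring D.

Lemma inj_half F1 F2 : localizing_system D F1 -> finite_type D F1 ->
     localizing_system D F2 -> finite_type D F2 ->
     (forall p, SF D F1 p <-> SF D F2 p) -> forall I, F1 I -> F2 I.
Proof.
move=> LS1 FT1 LS2 FT2 Heq I FI.
have [J [[HJ [s [Ds Hs]]] [FJ JI]]] := FT1 I FI.
have H1 := Poly_SF HD LS1 Ds HJ Hs FJ.
have /(SF_content HD LS2 FT2) H2 := proj1 (Heq _) H1.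
apply: (F_up LS2 (F_up LS2 H2 HJ _) (F_ideal LS1 FI) JI).
move=> x; apply: (gen_sub HJ) => i _; rewrite coef_Poly; exact: (fg_in HD HJ Hs).
Qed.
End Inj.

Section Surj.
Variable K : fieldType.
Variable D : K -> Prop.
Hypothesis HD : subring D.
Variable S : {poly K} -> Prop.
Hypothesis HS : mult_subset D S.
Hypothesis HSat : ext_saturated D S.

Definition FS (I : K -> Prop) := ideal D I /\ exists f, S f /\ polyIn I f.

Lemma FS_LS2 I J : FS I -> ideal D J -> (forall i, I i -> FS (colonD D J i)) -> FS J.
Proof.
move=> [HI [f [Sf If]]] HJ Hcol; split=> //.
have HG : forall x, exists g, I x -> S g /\ polyIn (colonD D J x) g.
  move=> x; case: (classic (I x)) => Ix.
    by have [_ [g [Sg Hg]]] := Hcol x Ix; exists g.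
  by exists 0.
pose G x := proj1_sig (constructive_indefinite_description _ (HG x)).
have GP : forall x, I x -> S (G x) /\ polyIn (colonD D J x) (G x).
  by move=> x; rewrite /G; case: constructive_indefinite_description.
pose s := flatten [seq [seq c * a | c <- (G a : seq K)] | a <- (f : seq K)].
have memS : forall y, y \in s -> exists a c, a \in (f : seq K) /\ c \in (G a : seq K) /\ y = c * a.
  move=> y /flattenP [t /mapP [a Ha ->] /mapP [c Hc0 ->]].
  by exists a, c.
have Ifa : forall a, a \in (f : seq K) -> I a.
  by move=> a /(nthP 0) [k Hk <-]; apply: If.
exists (Poly s); split; last first.
  apply: (polyIn_Poly); first by case: HJ => _ [].
  move=> i Hi; have [a [c [Ha [Hc ->]]]] := memS _ (mem_nth 0 Hi).
  have [_ Hg] := GP a (Ifa a Ha).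
  by move: Hc => /(nthP 0) [l Hl <-]; case: (Hg l).
apply/HSat; split.
  apply: polyIn_Poly; first exact: (D0 HD).
  move=> i Hi; have [a [c [Ha [Hc ->]]]] := memS _ (mem_nth 0 Hi).
  have [_ Hg] := GP a (Ifa a Ha).
  apply: (Dmul HD).
    by move: Hc => /(nthP 0) [l Hl <-]; case: (Hg l).
  by case: HI => HID _; apply: HID; apply: Ifa.
move=> [P [HP [HSP Ph]]].
have [k Hk] := not_all_ex_not _ _ (HSP f Sf).
have [HPI [nP1 Hpr]] := HP.
have kf : (k < size f)%N.
  by rewrite ltnNge; apply/negP => Hk'; apply: Hk; rewrite nth_default //; case: HPI => _ [].
have Ik : I f`_k := If k.
set a := f`_k in Hk Ik *.
have [SG HG'] := GP _ Ik.
have [l Hl] := not_all_ex_not _ _ (HSP _ SG).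
have lG : (l < size (G a))%N.
  by rewrite ltnNge; apply/negP => Hl'; apply: Hl; rewrite nth_default //; case: HPI => _ [].
have ins : (G a)`_l * a \in s.
  apply/flattenP; exists [seq c * a | c <- (G a : seq K)].
    by apply/mapP; exists a => //; apply: mem_nth.
  by apply/mapP; exists (G a)`_l => //; apply: mem_nth.
have : P ((G a)`_l * a).
  have := Ph (index ((G a)`_l * a) s); rewrite coef_Poly nth_index //.
case/Hpr.
- by case: (HG' l).
- by case: HI => HID _; apply: HID.
- done.
- done.
Qed.

Lemma FS_LS : localizing_system D FS.
Proof.
have [SD [S1 [nS0 SM]]] := HS.
split; first by move=> I [].
split; first by exists D; split; [exact: (ideal_D HD) | exists 1; split=> //; exact: (polyIn1 HD)].
split.
  move=> [_ [f [Sf Hf]]]; apply: nS0; suff -> : 0 = f by [].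
  by apply/polyP => i; rewrite coef0 Hf.
split; last exact: FS_LS2.
by move=> I J [HI [f [Sf If]]] HJ IJ; split=> //; exists f; split=> // i; apply: IJ.
Qed.

Lemma FS_FT : finite_type D FS.
Proof.
have [SD [S1 [nS0 SM]]] := HS.
move=> I [HI [f [Sf If]]].
have Df := SD f Sf.
have Hg : ideal D (gen D f) by apply: (gen_ideal HD) => i _; apply: Df.
exists (gen D f); split.
  split=> //; exists f; split=> //; by move=> i _; apply: Df.
split.
  split=> //; exists f; split=> //.
  apply: (polyIn_ideal_nth Hg) => i Hi; exact: (gen_in HD).
by move=> x; apply: (gen_sub HI) => i _; apply: If.
Qed.

Lemma FS_eq p : S p <-> SF D FS p.
Proof.
rewrite (HSat p); split.
  move=> [Dp Hp]; split=> //; move=> [Q [HQ [nFQ Qp]]]; apply: Hp.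
  exists Q; split=> //; split=> // q Sq Qq; apply: nFQ; split; first exact: (proj1 HQ).
  by exists q.
move=> [Dp Hp]; split=> //; move=> [Q [HQ [HSQ Qp]]]; apply: Hp.
exists Q; split=> //; split=> // [[_ [q [Sq Qq]]]]; exact: (HSQ q).
Qed.
End Surj.

Lemma field_id (L : fieldType) (w s g t e f : L) : w * s = g -> t != 0 ->
  (w + e * (f / t)) * (s * t) = g * t + e * (f * s).
Proof.
move=> Hw Ht; rewrite mulrDl mulrA Hw; congr (_ + _).
by rewrite -!mulrA; congr (_ * (_ * _)); rewrite mulrCA mulVf // mulr1.
Qed.

Lemma toKX_inj (K : fieldType) (p q : {poly K}) : toKX p = toKX q -> p = q.
Proof. by move=> /eqP; rewrite /toKX tofrac_eq => /eqP. Qed.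

Lemma toKXM (K : fieldType) (p q : {poly K}) : toKX (p * q) = toKX p * toKX q.
Proof. by rewrite /toKX rmorphM. Qed.

Lemma toKXD (K : fieldType) (p q : {poly K}) : toKX (p + q) = toKX p + toKX q.
Proof. by rewrite /toKX rmorphD. Qed.

Lemma toKX_neq0 (K : fieldType) (p : {poly K}) : p != 0 -> toKX p != 0.
Proof. by rewrite /toKX tofrac_eq0. Qed.

Section Part4.
Variable K : fieldType.
Variable D : K -> Prop.
Hypothesis HD : subring D.
Variable F : (K -> Prop) -> Prop.
Hypothesis LS : localizing_system D F.
Hypothesis FT : finite_type D F.

Lemma clear_den E : dmod D E -> forall n (e : 'I_n -> K) (r : 'I_n -> {fraction {poly K}}),
  (forall i, E (e i)) -> (forall i, locDX D (SF D F) (r i)) ->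
  exists s g, SF D F s /\ polyIn E g /\
    (\sum_(i < n) toKX (e i)%:P * r i) * toKX s = toKX g.
Proof.
move=> HE; have [E0 [EA EM]] := HE.
have [SFD [SF1 [_ SFM]]] := SF_mult HD LS.
elim=> [|n IH] e r He Hr.
  exists 1, 0; split=> //; split; first by move=> i; rewrite coef0.
  by rewrite big_ord0 mul0r /toKX rmorph0.
rewrite big_ord_recr /=.
have [s [g [Ss [Eg Hsg]]]] := IH (fun i => e (widen_ord (leqnSn n) i))
   (fun i => r (widen_ord (leqnSn n) i)) (fun i => He _) (fun i => Hr _).
have [f [t [Df [St ->]]]] := Hr ord_max.
exists (s * t), (g * t + (e ord_max)%:P * (f * s)); split; first exact: SFM.
split.
  move=> i; rewrite coefD; apply: EA.
    rewrite mulrC; apply: (polyIn_mul HE) => //; exact: SFD.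
  rewrite coefCM mulrC; apply: EM; last exact: He.
  by apply: (polyInD_mul HD) => //; exact: SFD.
rewrite toKXM toKXD !toKXM; apply: field_id => //.
exact/toKX_neq0/(SF_neq0 HD LS).
Qed.
End Part4.

Section Part4b.
Variable K : fieldType.
Variable D : K -> Prop.
Hypothesis HD : subring D.
Variable F : (K -> Prop) -> Prop.
Hypothesis LS : localizing_system D F.
Hypothesis FT : finite_type D F.

Lemma part4 E : Fbar D E -> forall z : K, star_F F E z <-> ext_mod D (SF D F) E (toKX z%:P).
Proof.
move=> [E0 [EA [EM _]]] z.
have HE : dmod D E by split=> //; split.
split.
  move=> [I [FI HI]].
  have [J [[HJ [s [Ds Hs]]] [FJ JI]]] := FT FI.
  have Sf := Poly_SF HD LS Ds HJ Hs FJ.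
  set f := Poly s in Sf.
  exists (size f), (fun i => z * f`_(val i)), (fun i => toKX 'X^(val i) / toKX f).
  split.
    move=> i; apply: HI; apply: JI; rewrite /f coef_Poly; exact: (fg_in HD HJ Hs).
  split.
    move=> i; exists 'X^(val i), f; split=> //; exact: (polyInX HD).
  have Hf : z%:P * f = \sum_(i < size f) (z * f`_i)%:P * 'X^i.
    rewrite -{1}[f]coefK poly_def mulr_sumr; apply: eq_bigr => i _.
    by rewrite -mul_polyC mulrA polyCM.
  have Hf0 : toKX f != 0 by apply: toKX_neq0; exact: (SF_neq0 HD LS).
  under eq_bigr => i _ do rewrite mulrA.
  rewrite -mulr_suml.
  have -> : \sum_(i < size f) toKX (z * f`_i)%:P * toKX 'X^i = toKX (z%:P * f).
    rewrite Hf /toKX rmorph_sum; apply: eq_bigr => i _; exact: (esym (tofracM _ _)).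
  by rewrite toKXM mulfK.
move=> [n [e [r [He [Hr Hz]]]]].
have [s [g [Ss [Eg Hsg]]]] := clear_den HD LS HE He Hr.
rewrite -Hz -toKXM in Hsg.
have {Hsg} Hsg := toKX_inj Hsg.
have Fs := SF_content HD LS FT Ss.
exists (gen D s); split=> // i [ds [Hsz [Hds ->]]].
rewrite mulr_sumr; apply: (dmod_sum HE) => k.
rewrite mulrCA; apply: EM; first by apply: Hds; rewrite Hsz.
by have := Eg k; rewrite -Hsg coefCM.
Qed.
End Part4b.

Theorem corollary2p2 (K : fieldType) (D : K -> Prop) :
  is_quotient_field D ->
  (* S(F) lands in the extended saturated multiplicative subsets *)
  (forall F, localizing_system D F -> finite_type D F ->
     mult_subset D (SF D F) /\ ext_saturated D (SF D F)) /\
  (* injectivity *)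
  (forall F1 F2, localizing_system D F1 -> finite_type D F1 ->
     localizing_system D F2 -> finite_type D F2 ->
     (forall p, SF D F1 p <-> SF D F2 p) -> forall I, F1 I <-> F2 I) /\
  (* surjectivity *)
  (forall S, mult_subset D S -> ext_saturated D S ->
     exists F, localizing_system D F /\ finite_type D F /\
       forall p, S p <-> SF D F p) /\
  (* E_F = E D[X]_{S(F)} \cap K *)
  (forall F, localizing_system D F -> finite_type D F ->
     forall E, Fbar D E ->
       forall z : K, star_F F E z <-> ext_mod D (SF D F) E (toKX z%:P)).
Proof.
move=> [HD _]; split.
  move=> F LS FT; split; [exact: (SF_mult HD LS) | exact: SF_sat].
split.
  move=> F1 F2 LS1 FT1 LS2 FT2 Heq I; split.
    exact: (inj_half HD LS1 FT1 LS2 FT2 Heq).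
  apply: (inj_half HD LS2 FT2 LS1 FT1) => p; split=> /Heq //.
split.
  move=> S HS HSat; exists (FS D S); split; first exact: (FS_LS HD HS HSat).
  split; first exact: (FS_FT HD HS).
  exact: (FS_eq HSat).
move=> F LS FT E HE z; exact: (part4 HD LS FT HE).
Qed.
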